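(* Let $A$ be a subalgebra of the matrix metabelian Lie algebra $M^0_{I,\Lambda}$. Then $\mathrm{Fit}(A)$ (which is abelian) is a torsion-free module over the polynomial ring $k[x_d:d\in D]$, where the module structure is defined via a family $\{e_d:d\in D\}\subseteq A$ whose images form a basis of $A/\mathrm{Fit}(A)$ by $b\cdot x_d=b\circ e_d$.
   Context: For sets $I,\Lambda$ and a field $k$, let $R=k[x_\alpha:\alpha\in\Lambda]$ and $T$ the free $R$-module with basis $\{u_i:i\in I\}$. $M_{I,\Lambda}$ is the set of pairs $(f,u)$, $f\in R$, $u\in T$, with componentwise linear operations and product $(f,u)\circ(g,v)=(0,ug-vf)$; $M^0_{I,\Lambda}$ is its subalgebra of pairs $(f,u)$ with $f$ a $k$-linear combination of the variables $x_\alpha$ (possibly $0$). $\mathrm{Fit}(A)$ is the ideal of $A$ generated by all elements lying in nilpotent ideals of $A$. For an abelian ideal $J\supseteq A^2$ of a metabelian Lie algebra, the module action $b\cdot x_d=b\circ e_d$ extends multiplicatively and linearly to a well-defined module structure over the commutative polynomial ring. *)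

(* Defs.v *)
From HB Require Import structures.
From mathcomp Require Import all_boot all_order all_algebra.
From mathcomp Require Import finmap.
From mathcomp.multinomials Require Import monalg.

Set Implicit Arguments.
Unset Strict Implicit.
Unset Printing Implicit Defensive.

Import GRing.Theory.
Local Open Scope ring_scope.

Definition Rpoly (k : fieldType) (L : choiceType) := {malg k[{cmonom L}]}.

(* T = free R-module with basis {u_i : i in I} (finitely supported I -> R) *)
Definition Tmod (k : fieldType) (L I : choiceType) := {malg (Rpoly k L)[I]}.

Section Matrix.
Variables (k : fieldType) (L I : choiceType).
Local Notation R := (Rpoly k L).
Local Notation T := (Tmod k L I).

Definition Mel := (R * T)%type.

Definition Mzero : Mel := (0, 0).
Definition Madd (a b : Mel) : Mel := (a.1 + b.1, a.2 + b.2).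
Definition Mopp (a : Mel) : Mel := (- a.1, - a.2).
Definition Mscale (c : k) (a : Mel) : Mel := (c *: a.1, (c%:A : R) *: a.2).
Definition Mbr (a b : Mel) : Mel := (0, b.1 *: a.2 - a.1 *: b.2).

Definition linear_poly (f : R) : Prop :=
  forall m, m \in msupp f -> exists a : L, m = ucm a.

Definition inM0 (x : Mel) : Prop := linear_poly x.1.

Definition subspace (S : Mel -> Prop) : Prop :=
  [/\ S Mzero,
      (forall x y, S x -> S y -> S (Madd x y)) &
      (forall c x, S x -> S (Mscale c x))].

Definition subalgebraM0 (A : Mel -> Prop) : Prop :=
  [/\ subspace A,
      (forall x y, A x -> A y -> A (Mbr x y)) &
      (forall x, A x -> inM0 x)].

Definition ideal (A J : Mel -> Prop) : Prop :=
  [/\ subspace J,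
      (forall x, J x -> A x) &
      (forall a x, A a -> J x -> J (Mbr a x))].

Definition nilpotent (J : Mel -> Prop) : Prop :=
  exists n : nat, forall (xs : seq Mel) (x : Mel),
    size xs = n -> (forall y, y \in xs -> J y) -> J x ->
    foldr Mbr x xs = Mzero.

Definition Fit (A : Mel -> Prop) (x : Mel) : Prop :=
  forall K : Mel -> Prop, ideal A K ->
    (forall J, ideal A J -> nilpotent J -> forall y, J y -> K y) -> K x.

Section Family.
Variables (D : choiceType) (e : D -> Mel).

Definition lincomb (s : seq D) (c : D -> k) : Mel :=
  foldr (fun d acc => Madd (Mscale (c d) (e d)) acc) Mzero s.

Definition basis_mod_Fit (A : Mel -> Prop) : Prop :=
  [/\ (forall d, A (e d)),
      (forall (s : seq D) (c : D -> k), uniq s -> Fit A (lincomb s c) ->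
          forall d, d \in s -> c d = 0) &
      (forall a, A a -> exists (s : seq D) (c : D -> k),
          Fit A (Madd a (Mopp (lincomb s c))))].

Definition act_monom (m : {cmonom D}) (b : Mel) : Mel :=
  foldr (fun d x => iter (m d) (fun y => Mbr y (e d)) x) b (finsupp m).

Definition act (b : Mel) (p : {malg k[{cmonom D}]}) : Mel :=
  foldr (fun m acc => Madd (Mscale p@_m (act_monom m b)) acc) Mzero (msupp p).

End Family.
End Matrix.

(* Main.v *)
Require Import Defs.
From HB Require Import structures.
From mathcomp Require Import all_boot all_order all_algebra.
From mathcomp Require Import finmap.
From mathcomp.multinomials Require Import monalg.
From mathcomp.multinomials Require mpoly.
Set Implicit Arguments. Unset Strict Implicit. Unset Printing Implicit Defensive.
Import GRing.Theory.

From Stdlib Require Import Classical.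
Module Aux.
Local Open Scope ring_scope.
Local Open Scope fset_scope.
Module Dom.
Import mpoly.
Section D.
Context (k : fieldType) (L : choiceType) (n : nat) (s : n.-tuple L).

Definition ren (m : cmonom L) : 'X_{1..n} := [multinom m (tnth s i) | i < n].

Lemma renM m1 m2 : ren (mmul m1 m2) = (ren m1 + ren m2)%MM.
Proof. by apply/mnmP => i; rewrite mnmDE !mnmE cmM. Qed.

Lemma ren1 : ren mone = 0%MM.
Proof. by apply/mnmP => i; rewrite mnm0E mnmE cm1. Qed.

Definition hX (m : cmonom L) : mpoly n k := 'X_[ren m].

Lemma hX_mmorph : mmorphism hX.
Proof. split; first by move=> m1 m2; rewrite /hX renM mpolyXD. by rewrite /hX ren1 mpolyX0. Qed.

HB.instance Definition _ := isMultiplicative.Build _ _ hX hX_mmorph.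

Definition rho (p : malg (cmonom L) k) : mpoly n k := monalg.mmap (mpolyC n (R:=k)) hX p.

Lemma rho_coeff (p : malg (cmonom L) k) m0 :
  {in monalg.msupp p &, injective ren} -> m0 \in monalg.msupp p ->
  mpoly.mcoeff (ren m0) (rho p) = monalg.mcoeff m0 p.
Proof.
move=> inj m0in; rewrite /rho monalg.mmapE raddf_sum /=.
rewrite (bigD1_seq m0) ?fset_uniq //= mcoeffCM mcoeffX eqxx mulr1 big1 ?addr0 //.
move=> m mm0; rewrite mcoeffCM mcoeffX.
case: (boolP (m \in monalg.msupp p)) => mi.
  case: eqP => [/inj|]; last by rewrite mulr0.
  by move=> /(_ mi m0in) e; rewrite e eqxx in mm0.
by rewrite (monalg.mcoeff_outdom mi) mul0r.
Qed.
End D.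

Lemma malg_domain (k : fieldType) (L : choiceType) (p q : malg (cmonom L) k) :
  p * q = 0 -> p = 0 \/ q = 0.
Proof.
move=> pq.
pose S := \big[fsetU/fset0]_(m <- (monalg.msupp p `|` monalg.msupp q)%fset) finsupp m.
pose s := in_tuple (enum_fset S).
have inS m : m \in (monalg.msupp p `|` monalg.msupp q)%fset -> (finsupp m `<=` S)%fset.
  move=> mi; rewrite /S (big_fsetD1 m mi) /=; exact: fsubsetUl.
have inj (r : malg (cmonom L) k) : (monalg.msupp r `<=` monalg.msupp p `|` monalg.msupp q)%fset ->
    {in monalg.msupp r &, injective (ren s)}.
  move=> sub m1 m2 m1i m2i e; apply/eqP/cmP => a.
  have s1 := inS _ (fsubsetP sub _ m1i); have s2 := inS _ (fsubsetP sub _ m2i).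
  case: (boolP (a \in S)) => aS.
    have : a \in (s : seq L) by [].
    case/tnthP => i ->.
    by move: e => /mnmP /(_ i); rewrite !mnmE.
  have h1 : a \notin finsupp m1 by apply: contra aS => /(fsubsetP s1).
  have h2 : a \notin finsupp m2 by apply: contra aS => /(fsubsetP s2).
  by move: h1 h2; rewrite -!cmE_eq0 => /eqP -> /eqP ->.
have : rho s p * rho s q = 0 by rewrite /rho -rmorphM /= pq raddf0.
move/eqP; rewrite mulf_eq0 => /orP [] /eqP r0.
  left; apply/eqP; rewrite -monalg.msupp_eq0; apply/eqP/fsetP => m; rewrite inE.
  apply/negbTE/negP => mi.
  have := rho_coeff (inj p (fsubsetUl _ _)) mi.
  by rewrite r0 mcoeff0 => /esym /eqP; rewrite monalg.mcoeff_eq0 mi.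
right; apply/eqP; rewrite -monalg.msupp_eq0; apply/eqP/fsetP => m; rewrite inE.
apply/negbTE/negP => mi.
have := rho_coeff (inj q (fsubsetUr _ _)) mi.
by rewrite r0 mcoeff0 => /esym /eqP; rewrite monalg.mcoeff_eq0 mi.
Qed.
End Dom.
Section Hprod.
Context (J : choiceType) (S : comNzRingType) (phi : J -> S).
Definition Hprod (m : {cmonom J}) : S := \prod_(a <- finsupp m) phi a ^+ m a.

Lemma HprodEw (m : {cmonom J}) (F : {fset J}) : finsupp m `<=` F ->
  Hprod m = \prod_(a <- F) phi a ^+ m a.
Proof.
move=> le; rewrite /Hprod (big_fset_incl _ le) // => x _ xn.
by rewrite fsfun_dflt // expr0.
Qed.

Lemma Hprod_mmorph : mmorphism Hprod.
Proof.
split.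
  move=> m1 m2; rewrite /= (HprodEw (fsubsetUl (finsupp m1) (finsupp m2))).
  rewrite (HprodEw (fsubsetUr (finsupp m1) (finsupp m2))).
  rewrite (HprodEw (m := mmul m1 m2) (F := finsupp m1 `|` finsupp m2)); last by rewrite mdomD.
  rewrite -big_split /=; apply: eq_bigr => a _; by rewrite cmM exprD.
by rewrite /Hprod mdom1 big_seq_fset0.
Qed.

HB.instance Definition _ := isMultiplicative.Build _ _ Hprod Hprod_mmorph.
Lemma Hprod_def m : Hprod m = \prod_(a <- finsupp m) phi a ^+ m a.
Proof. by []. Qed.
Lemma Hprod_u a : Hprod (ucm a) = phi a.
Proof. by rewrite /Hprod mdomU big_seq_fset1 cmUU expr1. Qed.
End Hprod.



Lemma malgU_mul (k : fieldType) (J : choiceType) (m1 m2 : cmonom J) :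
  (<< mmul m1 m2 >> : malg (cmonom J) k) = << m1 >> * << m2 >>.
Proof. by rewrite malgM_def fgmulUU mulr1. Qed.

Lemma Hprod_ucm (k : fieldType) (J : choiceType) (m : cmonom J) :
  Hprod (fun d => (<< ucm d >> : malg (cmonom J) k)) m = << m >>.
Proof.
move: {2}(mdeg m) (erefl (mdeg m)) => N; elim: N m => [|N IH] m hm.
  by move/mdeg_eq0I: hm => ->; rewrite (mmorph1 (Hprod _)).
have : finsupp m != fset0.
  apply/negP => /eqP e; move: hm; rewrite mdegE e big_seq_fset0 //.
case/fset0Pn => a ha.
set m' := divcm m (ucm a).
have em : m = mmul (ucm a) m'.
  apply/eqP/cmP => i; rewrite cmM /m' divcmE cmU.
  case: eqP => [<-|_]; last by rewrite subn0.
  by rewrite subnKC // lt0n cmE_neq0.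
have hm' : mdeg m' = N by move: hm; rewrite {1}em mdegM mdegU add1n => -[].
rewrite em (mmorphM (Hprod _)) malgU_mul.
congr (_ * _); last exact: IH.
exact: Hprod_u.
Qed.


Lemma malgCU (k : fieldType) (J : choiceType) (c : k) (m : cmonom J) :
  c%:MP * (<< m >> : malg (cmonom J) k) = << c *g m >>.
Proof. by rewrite malgM_def fgmulUU mulr1 mul1m. Qed.

Lemma sum_delta (k : fieldType) (V : lmodType k) n (X : 'I_n -> V) i :
  \sum_l (1%:M : 'M[k]_n) i l *: X l = X i.
Proof.
rewrite (bigD1 i) //= mxE eqxx scale1r big1 ?addr0 // => l li.
by rewrite mxE eq_sym (negbTE li) scale0r.
Qed.

Section F3.
Context (k : fieldType) (L D : choiceType) (g : D -> Rpoly k L).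
Hypothesis glin : forall d, linear_poly (g d).
Hypothesis gind : forall (s : seq D) (c : D -> k), uniq s ->
  \sum_(d <- s) c d *: g d = 0 -> forall d, d \in s -> c d = 0.

Definition evg (p : malg (cmonom D) k) : Rpoly k L := mmap (@malgC (cmonom L) k) (Hprod g) p.

Lemma tnth_inj (T : eqType) n (t : n.-tuple T) i j : uniq t -> (tnth t i == tnth t j) = (i == j).
Proof. by move/tuple_uniqP => inj; apply/eqP/eqP => [/inj|->]. Qed.

Lemma evg_inj (p : malg (cmonom D) k) : p != 0 -> evg p != 0.
Proof.
move=> pn0.
pose S := \big[fsetU/fset0]_(m <- msupp p) finsupp m.
pose s := in_tuple (enum_fset S).
pose n := size (enum_fset S).
pose V := \big[fsetU/fset0]_(d <- S) msupp (g d).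
pose v := in_tuple (enum_fset V).
pose nv := size (enum_fset V).
have us : uniq s by exact: fset_uniq.
have uv : uniq v by exact: fset_uniq.
have gV d : d \in S -> (msupp (g d) `<=` V)%fset.
  by move=> dS; rewrite /V (big_fsetD1 d dS) /=; exact: fsubsetUl.
have mS m : m \in msupp p -> (finsupp m `<=` S)%fset.
  by move=> mi; rewrite /S (big_fsetD1 m mi) /=; exact: fsubsetUl.
pose C : 'M[k]_(n, nv) := \matrix_(i, j) (g (tnth s i))@_(tnth v j).
have Cfree : row_free C.
  apply: inj_row_free => u uC.
  pose c d := \sum_(i < n) ((tnth s i == d)%:R : k) * u 0 i.
  have cs i : c (tnth s i) = u 0 i.
    rewrite /c (bigD1 i) //= eqxx mul1r big1 ?addr0 // => j ji.
    by rewrite tnth_inj // (negbTE ji) mul0r.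
  have sum0 : \sum_(d <- s) c d *: g d = 0.
    rewrite big_tuple; apply/malgP => m; rewrite mcoeff0 raddf_sum /=.
    under eq_bigr => i _ do rewrite mcoeffZ cs.
    case: (boolP (m \in V)) => mV.
      have : m \in (v : seq _) by [].
      case/tnthP => j ->.
      have := congr1 (fun M : 'rV_nv => M 0 j) uC; rewrite !mxE => e.
      rewrite -[RHS]e; apply: eq_bigr => i _; by rewrite mxE.
    rewrite big1 // => i _; rewrite mcoeff_outdom ?mulr0 //.
    apply: contra mV; apply/fsubsetP/gV; exact: mem_tnth.
  apply/matrixP => i j; rewrite ord1 mxE -cs; apply: (gind us sum0); exact: mem_tnth.
case/row_freeP: Cfree => B CB.
pose X (l : 'I_n) := (<< ucm (tnth s l) >> : malg (cmonom D) k).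
pose beta (j : 'I_nv) := \sum_(l < n) B j l *: X l.
pose ell2 (m : cmonom L) := \sum_(j < nv) ((tnth v j == m)%:R : k) *: beta j.
pose ell (a : L) := ell2 (ucm a).
pose psi : {rmorphism Rpoly k L -> malg (cmonom D) k} := mmap (@malgC (cmonom D) k) (Hprod ell).
have ell2v j : ell2 (tnth v j) = beta j.
  rewrite /ell2 (bigD1 j) //= eqxx scale1r big1 ?addr0 // => j' j'j.
  by rewrite tnth_inj // (negbTE j'j) scale0r.
have C1 i : psi (g (tnth s i)) = << ucm (tnth s i) >>.
  have dS : tnth s i \in S by exact: mem_tnth.
  change (mmap (@malgC (cmonom D) k) (Hprod ell) (g (tnth s i)) = << ucm (tnth s i) >>).
  rewrite mmapE.
  transitivity (\sum_(m <- msupp (g (tnth s i))) (g (tnth s i))@_m *: ell2 m).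
    apply: eq_big_seq => m mi; have [a ->] := glin mi.
    by rewrite Hprod_u mul_malgC.
  rewrite (big_fset_incl _ (gV _ dS)); last first.
    by move=> x _ xn; rewrite mcoeff_outdom // scale0r.
  rewrite big_tnth -/v -/nv.
  under eq_bigr => j _ do rewrite ell2v /beta scaler_sumr.
  rewrite exchange_big /=.
  transitivity (\sum_(l < n) (C *m B) i l *: X l).
    apply: eq_bigr => l _; rewrite mxE scaler_suml; apply: eq_bigr => j _.
    by rewrite scalerA /C mxE.
  by rewrite CB sum_delta.
have C2 (m : cmonom D) : (finsupp m `<=` S)%fset -> psi (Hprod g m) = << m >>.
  move=> sub; rewrite Hprod_def rmorph_prod.
  rewrite -(Hprod_ucm k m) Hprod_def.
  apply: eq_big_seq => a ai.
  rewrite rmorphXn.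
  have : a \in (s : seq D) by apply: (fsubsetP sub).
  by case/tnthP => i ->; rewrite C1.
have C3 : psi (evg p) = p.
  rewrite /evg mmapE raddf_sum [RHS]monalgE /=.
  apply: eq_big_seq => m mi.
  have psiC c : psi c%:MP = c%:MP by exact: mmapC.
  by rewrite rmorphM psiC C2 ?mS // malgCU.
apply/negP => /eqP e; move: pn0; by rewrite -C3 e raddf0 eqxx.
Qed.
End F3.
Lemma seq_single (T : eqType) (s : seq T) m :
  (forall a b : T, a = b) -> uniq s -> m \in s -> s = [:: m].
Proof.
move=> all; case: s => [|x [|y r]] //=; first by rewrite (all x m).
by rewrite (all x y) inE eqxx.
Qed.

Section Main.
Context (k : fieldType) (L I : choiceType).
Local Notation R := (Rpoly k L).
Local Notation T := (Tmod k L I).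
Local Notation Mel := (Mel k L I).

Lemma T_tf (r : R) (w : T) : r *: w = 0 -> r = 0 \/ w = 0.
Proof.
move=> h; case: (eqVneq w 0) => [->|wn0]; [by right|left].
have [i hi] : exists i, w@_i != 0.
  apply: NNPP => hn.
  have w0 : w = 0.
    apply/malgP => i; rewrite mcoeff0.
    by apply/eqP/negPn/negP => hi; apply: hn; exists i.
  by rewrite w0 eqxx in wn0.
have := congr1 (mcoeff i) h; rewrite mcoeffZ mcoeff0 => /Dom.malg_domain [//|].
by move/eqP; rewrite (negbTE hi).
Qed.

Lemma Tpow (r : R) n (w : T) : r != 0 -> r ^+ n *: w = 0 -> w = 0.
Proof.
move=> rn0; elim: n => [|n IH]; first by rewrite expr0 scale1r.
rewrite exprS -scalerA => /T_tf [] h; [by rewrite h eqxx in rn0 | exact: IH].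
Qed.

Lemma foldr_nseq (y : Mel) (w : T) n :
  foldr (@Mbr k L I) (0, w) (nseq n y) = (0, (- y.1) ^+ n *: w).
Proof.
elim: n => [|n IH]; first by rewrite expr0 scale1r.
rewrite /= IH /Mbr /= scale0r sub0r exprS -scalerA scaleNr.
by [].
Qed.

Lemma lincomb_in (A : Mel -> Prop) (D : choiceType) (e : D -> Mel) s c :
  subspace A -> (forall d, A (e d)) -> A (lincomb e s c).
Proof.
move=> [h0 hD hZ] he; elim: s => [|d s IH] //=.
by apply: hD => //; apply: hZ.
Qed.

Lemma lincomb1 (D : choiceType) (e : D -> Mel) s c :
  (lincomb e s c).1 = \sum_(d <- s) c d *: (e d).1.
Proof. by elim: s => [|d s IH]; rewrite ?big_nil ?big_cons //= IH. Qed.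

Lemma iter_Z (x : Mel) n (w : T) :
  iter n (fun y => Mbr y x) (0, w) = (0, x.1 ^+ n *: w).
Proof.
elim: n => [|n IH]; first by rewrite expr0 scale1r; reflexivity.
rewrite iterS IH /Mbr.
rewrite -[(0, x.1 ^+ n *: w).2]/(x.1 ^+ n *: w) -[(0, x.1 ^+ n *: w).1]/(0 : R).
by rewrite scale0r subr0 scalerA -exprS; reflexivity.
Qed.

Lemma act_monom_Z (D : choiceType) (e : D -> Mel) m (t : T) :
  act_monom e m (0, t) = (0, (\prod_(d <- finsupp m) (e d).1 ^+ m d) *: t).
Proof.
rewrite /act_monom; elim: (enum_fset (finsupp m)) => [|d r IH].
  by rewrite big_nil scale1r; reflexivity.
rewrite big_cons -scalerA -iter_Z -IH; reflexivity.
Qed.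

Lemma comm_trick (R' : comNzRingType) (V : lmodType R') (r f g : R') (u v w : V) :
  r *: u = f *: w -> r *: v = g *: w -> r *: (g *: u - f *: v) = 0.
Proof.
move=> hu hv; rewrite scalerBr !scalerA [r * g]mulrC [r * f]mulrC -!scalerA hu hv.
by rewrite !scalerA mulrC subrr.
Qed.

Lemma Mscale_neq (c : k) (x : Mel) : c != 0 -> x <> Mzero k L I ->
  Madd (Mscale c x) (Mzero k L I) <> Mzero k L I.
Proof.
case: x => x1 x2 cn0 xn0 E; apply: xn0.
have h1 : (c *: x1 + 0)%R = 0 := congr1 fst E.
have h2 : ((c%:A : R) *: x2 + 0)%R = 0 := congr1 snd E.
move/eqP: h1; rewrite addr0 scaler_eq0 (negbTE cn0) /= => /eqP ->.
move: h2; rewrite addr0 => /T_tf [|->]; last reflexivity.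
by move/eqP; rewrite scaler_eq0 oner_eq0 orbF (negbTE cn0).
Qed.

Lemma MscaleZ (c : k) (P : R) (t : T) :
  Mscale c (0, P *: t) = (0, (c%:MP * P) *: t).
Proof.
rewrite /Mscale /=.
by rewrite scaler0 scalerA mul_malgC mulr_algl.
Qed.

Lemma foldr_sum_pair (X : Type) (f : X -> Mel) (P : X -> R) (t : T) r :
  (forall x, f x = (0, P x *: t)) ->
  foldr (fun x acc => Madd (f x) acc) (Mzero k L I) r = (0, (\sum_(x <- r) P x) *: t).
Proof.
move=> hf; elim: r => [|x r IH]; first by rewrite big_nil scale0r.
rewrite big_cons /= IH hf /Madd /=.
by rewrite add0r scalerDl.
Qed.

Lemma act_Z (D : choiceType) (e : D -> Mel) p (t : T) :
  act e (0, t) p = (0, evg (fun d => (e d).1) p *: t).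
Proof.
rewrite /act /evg mmapE; apply: foldr_sum_pair => m.
by rewrite act_monom_Z -Hprod_def MscaleZ.
Qed.

Lemma main_aux (D : choiceType) (A : Mel -> Prop) (e : D -> Mel) :
  subalgebraM0 A -> basis_mod_Fit e A ->
  (forall x y, Fit A x -> Fit A y -> Mbr x y = Mzero k L I) /\
  (forall (b : Mel) (p : {malg k[{cmonom D}]}),
      Fit A b -> b <> Mzero k L I -> p <> 0%R -> act e b p <> Mzero k L I).
Proof.
move=> [sA brA linA] [eA bind bspan].
have idA : ideal A A by split.
have FitA x : Fit A x -> A x.
  by move=> hx; apply: hx => // J [_ JA _] _ y; exact: JA.
case: (classic (exists a b, [/\ A a, A b & Mbr a b <> Mzero k L I])).
  case=> a0 [b0 [ha0 hb0 hab]].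
  pose Z (x : Mel) := A x /\ x.1 = 0.
  have Zid : ideal A Z.
    case: sA => s0 sD sZ; split.
    - split; first by split => //; exact: s0.
      + by move=> x y [Ax x1] [Ay y1]; split; [exact: sD | rewrite /Madd /= x1 y1 addr0].
      + by move=> c x [Ax x1]; split; [exact: sZ | rewrite /Mscale /= x1 scaler0].
    - by move=> x [].
    - by move=> a x Aa [Ax _]; split; [exact: brA|].
  have Znil : nilpotent Z.
    exists 1%N => xs x; case: xs => [|x1 [|]] //= _ hx1 [_ x10].
    have [_ x11] := hx1 x1 (mem_head _ _).
    by rewrite /Mbr x10 x11 !scale0r subrr.
  have JZ J : ideal A J -> nilpotent J -> forall y, J y -> Z y.
    move=> [_ JA Jbr] [n hn] y Jy; split; first exact: JA.
    case: (eqVneq y.1 0) => // hy; exfalso; apply: hab.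
    have key a : A a -> y.1 *: a.2 = a.1 *: y.2.
      move=> Aa; have Jw := Jbr a y Aa Jy.
      have := hn (nseq n y) (Mbr a y) (size_nseq _ _) _ Jw.
      rewrite /Mbr foldr_nseq /Mzero => /(_ _) h.
      have {h} h : (0, (- y.1) ^+ n *: (y.1 *: a.2 - a.1 *: y.2)) = Mzero k L I.
        apply: h => z; rewrite mem_nseq => /andP [_ /eqP ->]; exact: Jy.
      case: h => h2.
      have hy' : - y.1 != 0 by rewrite oppr_eq0.
      move/eqP: (Tpow hy' h2); rewrite subr_eq0 => /eqP E; exact: E.
    have h2 : y.1 *: (b0.1 *: a0.2 - a0.1 *: b0.2) = 0.
      exact: comm_trick (key a0 ha0) (key b0 hb0).
    case/T_tf: h2 => [y0|h2]; first by rewrite y0 eqxx in hy.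
    by rewrite /Mbr h2; reflexivity.
  have FitZ x : Fit A x -> Z x by move=> hx; exact: hx.
  have ZFit x : Z x -> Fit A x by move=> hz K _ hK; exact: hK Z Zid Znil x hz.
  split.
    move=> x y /FitZ [_ x1] /FitZ [_ y1].
    rewrite /Mbr x1 y1 !scale0r subrr; reflexivity.
  move=> [b1 t] p /FitZ [Ab /= b10] bn0 pn0; rewrite b10 act_Z /Mzero.
  case=> /T_tf [h|t0]; last first.
    apply: bn0; rewrite b10 t0; reflexivity.
  have gl : forall d, linear_poly ((fun d => (e d).1) d) by move=> d; exact: (linA _ (eA d)).
  have gi : forall (s : seq D) (c : D -> k), uniq s ->
      \sum_(d <- s) c d *: (fun d => (e d).1) d = 0 -> forall d, d \in s -> c d = 0.
    move=> s c us hs d ds; apply: (bind s c us _ d ds); apply: ZFit; split.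
      exact: lincomb_in.
    by rewrite lincomb1.
  have := @evg_inj _ _ _ (fun d => (e d).1) gl gi p.
  rewrite h eqxx => hh; apply: pn0; apply/eqP; apply/negPn/negP => hp.
  by move: (hh hp).
move=> hab.
have ab a b : A a -> A b -> Mbr a b = Mzero k L I.
  move=> Aa Ab; apply: NNPP => h; apply: hab; by exists a, b.
have AFit x : A x -> Fit A x.
  move=> Ax K _ hK; apply: (hK A idA) => //.
  exists 1%N => xs y; case: xs => [|x1 [|]] //= _ hx1 Ay.
  exact: ab (hx1 x1 (mem_head _ _)) Ay.
split; first by move=> x y /FitA Ax /FitA Ay; exact: ab.
have noD (d : D) : False.
  have := bind [:: d] (fun _ => 1) isT (AFit _ (lincomb_in _ _ (e := e) sA eA)) d (mem_head _ _).
  by move/eqP; rewrite oner_eq0.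
have allm (m1 m2 : cmonom D) : m1 = m2 by apply/eqP/cmP => i; case: (noD i).
move=> b p _ bn0 pn0.
have : msupp p != fset0 by rewrite msupp_eq0; apply/eqP.
case/fset0Pn => m mp.
have pm : p@_m != 0 by rewrite mcoeff_neq0.
have hs : enum_fset (msupp p) = [:: m] := seq_single allm (fset_uniq _) mp.
have am : act_monom e m b = b.
  rewrite /act_monom; case: (enum_fset (finsupp m)) => [|d ?]; [reflexivity | case: (noD d)].
have -> : act e b p = Madd (Mscale p@_m (act_monom e m b)) (Mzero k L I).
  rewrite /act hs; reflexivity.
rewrite am; exact: Mscale_neq.
Qed.
End Main.
End Aux.
Import Aux.

Theorem lemma3p1p2 (k : fieldType) (L I D : choiceType)
    (A : Mel k L I -> Prop) (e : D -> Mel k L I) :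
  subalgebraM0 A -> basis_mod_Fit e A ->
  (forall x y, Fit A x -> Fit A y -> Mbr x y = Mzero k L I) /\
  (forall (b : Mel k L I) (p : {malg k[{cmonom D}]}),
      Fit A b -> b <> Mzero k L I -> p <> 0%R -> act e b p <> Mzero k L I).
Proof. exact: main_aux. Qed.
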